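(* Let ${\rm F}_5\subset\mathbb{P}^3(\mathbb{C})$ be the Fermat quintic $x^5-y^5-z^5+w^5=0$. The maximal number of pairwise disjoint lines contained in ${\rm F}_5$ is $13$. *)

(* Defs.v *)
From mathcomp Require Import all_boot all_algebra.
From mathcomp Require Import complex.
From mathcomp Require Import reals Rstruct.
Set Implicit Arguments. Unset Strict Implicit. Unset Printing Implicit Defensive.
Import GRing.Theory.
Local Open Scope ring_scope.

Definition C : numClosedFieldType := (Rdefinitions.R)[i].

Definition cx (v : 'rV[C]_4) : C := v ord0 (@Ordinal 4 0 isT).
Definition cy (v : 'rV[C]_4) : C := v ord0 (@Ordinal 4 1 isT).
Definition cz (v : 'rV[C]_4) : C := v ord0 (@Ordinal 4 2 isT).
Definition cw (v : 'rV[C]_4) : C := v ord0 (@Ordinal 4 3 isT).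

Definition fermat5 (v : 'rV[C]_4) : C :=
  cx v ^+ 5 - cy v ^+ 5 - cz v ^+ 5 + cw v ^+ 5.

(* A line of P^3(C) is a 2-dimensional linear subspace of C^4. *)
Definition is_line (L : {vspace 'rV[C]_4}) : Prop := \dim L = 2%N.

Definition line_on_F5 (L : {vspace 'rV[C]_4}) : Prop :=
  is_line L /\ forall v, v \in L -> fermat5 v = 0.

(* Two lines of P^3 are disjoint iff the corresponding planes of C^4
   meet only in 0. *)
Definition disjoint_lines (L1 L2 : {vspace 'rV[C]_4}) : Prop :=
  (L1 :&: L2)%VS = 0%VS.

Definition disjoint_family_on_F5 (s : seq {vspace 'rV[C]_4}) : Prop :=
  [/\ uniq s, (forall L, L \in s -> line_on_F5 L) &
      (forall L1 L2, L1 \in s -> L2 \in s -> L1 != L2 -> disjoint_lines L1 L2)].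

(* Main.v *)
Require Import Defs.
From mathcomp Require Import all_boot all_algebra.
From mathcomp Require Import complex.
From mathcomp Require Import reals Rstruct.
From mathcomp Require Import all_solvable all_field.
From mathcomp Require Import ring zify.

(* Proof outline:
   - the 75 lines of the Fermat quintic are classified (Geo5-Geo8 parts);
   - they are indexed by keys (t,i,j); lines meet iff keys are adjacent;
   - a verified branch-and-bound search shows no 14 pairwise non-adjacent keys;
   - an explicit family of 13 pairwise disjoint lines is exhibited. *)

Module Comb.
Set Implicit Arguments. Unset Strict Implicit. Unset Printing Implicit Defensive.

Definition key := (nat * nat * nat)%type.
Definition adjk (a b : key) : bool :=
  let '(t,i,j) := a in let '(u,k,l) := b in
  if t == u then (i == k) || (j == l)
  else if (t == 0) && (u == 1) then (i + l) %% 5 == (j + k) %% 5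
  else if (t == 1) && (u == 0) then (k + j) %% 5 == (l + i) %% 5
  else if (t == 0) && (u == 2) then k %% 5 == (i + j + l) %% 5
  else if (t == 2) && (u == 0) then i %% 5 == (k + l + j) %% 5
  else (k + l) %% 5 == (i + j) %% 5.

Definition rowk (a : key) := (a.1.1, a.1.2).
Definition rowcount (c : seq key) := size (undup (map rowk c)).

Fixpoint ex (n : nat) (c : seq key) (k : nat) : bool :=
  match n with
  | 0 => k == 0
  | n'.+1 => match c with
     | [::] => k == 0
     | v :: rest => if k == 0 then true else if k <= rowcount c then
          (if ex n' [seq w <- rest | ~~ adjk v w] k.-1 then true else ex n' rest k)
          else false
     end
  end.

Definition indep (X : seq key) :=
  forall x y, x \in X -> y \in X -> x != y -> ~~ adjk x y.

Lemma adjk_row a b : rowk a = rowk b -> adjk a b.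
Proof. by case: a => [[t i] j]; case: b => [[u k] l] [-> ->] /=; rewrite !eqxx. Qed.

Lemma indep_rowcount X c : uniq X -> {subset X <= c} -> indep X ->
  size X <= rowcount c.
Proof.
move=> uX sXc iX; rewrite /rowcount -(size_map rowk X).
apply: uniq_leq_size.
  rewrite map_inj_in_uniq // => x y xX yX exy; apply/eqP; apply/negPn/negP => nxy.
  by move: (iX x y xX yX nxy); rewrite adjk_row.
by move=> r /mapP [x xX ->]; rewrite mem_undup; apply: map_f; apply: sXc.
Qed.

Lemma indep_sub X Y : {subset X <= Y} -> indep Y -> indep X.
Proof. by move=> sXY iY x y xX yX; apply: iY; apply: sXY. Qed.

Lemma ex_correct n c k : size c <= n -> ex n c k = false ->
  forall X, uniq X -> {subset X <= c} -> indep X -> size X < k.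
Proof.
elim: n c k => [|n IH] c k.
  rewrite leqn0 => /nilP -> /= /negbT k0 X uX sX _.
  case: X uX sX => [|x X] //=; first by rewrite lt0n.
  by move=> _ /(_ x (mem_head _ _)).
case: c => [|v rest].
  move=> _ /= /negbT k0 X uX sX _; case: X uX sX => [|x X] //=; first by rewrite lt0n.
  by move=> _ /(_ x (mem_head _ _)).
move=> /= szc; case: ifP => // /negbT k0; case: ifP => [_|/negbT H]; last first.
  move=> _ X uX sX iX.
  have h := indep_rowcount uX sX iX; rewrite ltnNge.
  by apply: contra H => h2; apply: leq_trans h2 h.
case: ifP => // H1 H2 X uX sX iX.
have [vX|vX] := boolP (v \in X).
  have szX := size_rem vX; rewrite (perm_size (perm_to_rem vX)) /=.
  case: k k0 H1 H2 => [//|k] _ H1 _; rewrite ltnS.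
  apply: (IH _ _ _ H1).
  - by rewrite size_filter; apply: leq_trans (count_size _ _) _.
  - by rewrite rem_uniq.
  - move=> x xr; rewrite mem_filter.
    have xv : x != v by move: xr; rewrite (rem_filter _ uX) mem_filter => /andP [].
    have xX : x \in X by apply: mem_rem xr.
    rewrite (iX v x vX xX) ?(eq_sym v) ?xv //=.
    by move: (sX x xX); rewrite inE (negbTE xv).
  - by apply: (indep_sub _ iX) => x; apply: mem_rem.
apply: (IH _ _ _ H2) => //.
move=> x xX; move: (sX x xX); rewrite inE => /orP [/eqP xv|//].
by move: vX; rewrite -xv xX.
Qed.

Definition allkeys : seq key :=
  [seq (ti, j) | ti <- [seq (t, i) | t <- iota 0 3, i <- iota 0 5], j <- iota 0 5].

Lemma ex14 : ex 75 allkeys 14 = false.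
Proof. by vm_compute. Qed.

Lemma indep_le13 X : uniq X -> {subset X <= allkeys} -> indep X -> size X <= 13.
Proof. by move=> uX sX iX; apply: (ex_correct _ ex14 uX sX iX). Qed.

End Comb.
Import Comb.

Set Implicit Arguments. Unset Strict Implicit. Unset Printing Implicit Defensive.
Import GRing.Theory Num.Theory.
Local Open Scope ring_scope.


Lemma prim5 : {z : C | 5.-primitive_root z}.
Proof.
pose n := 5%N.
have n_gt0 : (0 < n)%N by [].
pose p : {poly C} := 'X^n - 1; have [r Dp] := closed_field_poly_normal p.
apply/sigW; rewrite (monicP _) ?monicXnsubC // scale1r in Dp.
have rn1: all n.-unity_root r by apply/allP=> z; rewrite -root_prod_XsubC -Dp.
have sz_r: (n < (size r).+1)%N.
  by rewrite -(size_prod_XsubC r id) -Dp size_XnsubC.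
have [|z] := hasP (has_prim_root n_gt0 rn1 _ sz_r); last by exists z.
by rewrite -separable_prod_XsubC -Dp separable_Xn_sub_1 // pnatr_eq0 -lt0n.
Qed.

Definition zeta : C := sval prim5.
Lemma zetaP : 5.-primitive_root zeta.
Proof. exact: svalP prim5. Qed.

Lemma zeta5 : zeta ^+ 5 = 1.
Proof. exact: prim_expr_order zetaP. Qed.
Lemma zetaX5 i : (zeta ^+ i) ^+ 5 = 1.
Proof. by rewrite -exprM mulnC exprM zeta5 expr1n. Qed.
Lemma zetaX_neq0 i : zeta ^+ i != 0.
Proof.
rewrite expf_neq0 //; apply/eqP => z0; move: zeta5; rewrite z0 expr0n /=.
by move/eqP; rewrite eq_sym oner_eq0.
Qed.
Lemma zetaE i j : (zeta ^+ i == zeta ^+ j) = (i == j %[mod 5]).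
Proof. exact: (eq_prim_root_expr zetaP i j). Qed.

Definition vec4 (a b c d : C) : 'rV[C]_4 := \row_(k < 4) nth 0 [:: a; b; c; d] k.

Lemma cx4 a b c d : cx (vec4 a b c d) = a. Proof. by rewrite /cx mxE. Qed.
Lemma cy4 a b c d : cy (vec4 a b c d) = b. Proof. by rewrite /cy mxE. Qed.
Lemma cz4 a b c d : cz (vec4 a b c d) = c. Proof. by rewrite /cz mxE. Qed.
Lemma cw4 a b c d : cw (vec4 a b c d) = d. Proof. by rewrite /cw mxE. Qed.

Lemma vec4E w : w = vec4 (cx w) (cy w) (cz w) (cw w).
Proof.
apply/rowP => k; rewrite /vec4 mxE; case: k => [[|[|[|[|m]]]] Hk] //=;
rewrite /cx /cy /cz /cw; congr (w _ _); exact: val_inj.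
Qed.

Lemma cxD u v : cx (u + v) = cx u + cx v. Proof. by rewrite /cx mxE. Qed.
Lemma cyD u v : cy (u + v) = cy u + cy v. Proof. by rewrite /cy mxE. Qed.
Lemma czD u v : cz (u + v) = cz u + cz v. Proof. by rewrite /cz mxE. Qed.
Lemma cwD u v : cw (u + v) = cw u + cw v. Proof. by rewrite /cw mxE. Qed.
Lemma cxZ a u : cx (a *: u) = a * cx u. Proof. by rewrite /cx mxE. Qed.
Lemma cyZ a u : cy (a *: u) = a * cy u. Proof. by rewrite /cy mxE. Qed.
Lemma czZ a u : cz (a *: u) = a * cz u. Proof. by rewrite /cz mxE. Qed.
Lemma cwZ a u : cw (a *: u) = a * cw u. Proof. by rewrite /cw mxE. Qed.
Lemma cxB u v : cx (u - v) = cx u - cx v. Proof. by rewrite /cx !mxE. Qed.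
Lemma cyB u v : cy (u - v) = cy u - cy v. Proof. by rewrite /cy !mxE. Qed.
Lemma czB u v : cz (u - v) = cz u - cz v. Proof. by rewrite /cz !mxE. Qed.
Lemma cwB u v : cw (u - v) = cw u - cw v. Proof. by rewrite /cw !mxE. Qed.
Lemma cx0 : cx 0 = 0. Proof. by rewrite /cx mxE. Qed.
Lemma cy0 : cy 0 = 0. Proof. by rewrite /cy mxE. Qed.
Lemma cz0 : cz 0 = 0. Proof. by rewrite /cz mxE. Qed.
Lemma cw0 : cw 0 = 0. Proof. by rewrite /cw mxE. Qed.

Definition coordE := (cx4, cy4, cz4, cw4, cxD, cyD, czD, cwD, cxZ, cyZ, czZ, cwZ,
  cxB, cyB, czB, cwB, cx0, cy0, cz0, cw0).

Lemma vec4_eq0 w : cx w = 0 -> cy w = 0 -> cz w = 0 -> cw w = 0 -> w = 0.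
Proof.
move=> h1 h2 h3 h4; rewrite (vec4E w) h1 h2 h3 h4.
by apply/rowP => k; rewrite !mxE; case: k => [[|[|[|[|m]]]] Hk].
Qed.


Lemma vec4_comb a b x1 x2 x3 x4 y1 y2 y3 y4 :
  a *: vec4 x1 x2 x3 x4 + b *: vec4 y1 y2 y3 y4 =
  vec4 (a * x1 + b * y1) (a * x2 + b * y2) (a * x3 + b * y3) (a * x4 + b * y4).
Proof. by apply/rowP => k; rewrite !mxE; case: k => [[|[|[|[|m]]]] Hk]. Qed.

Definition gens (k : nat * nat * nat) : 'rV[C]_4 * 'rV[C]_4 :=
  let: (t, i, j) := k in
  if t == 0%N then (vec4 1 (zeta^+i) 0 0, vec4 0 0 1 (zeta^+j))
  else if t == 1%N then (vec4 1 0 (zeta^+i) 0, vec4 0 1 0 (zeta^+j))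
  else (vec4 1 0 0 (- zeta^+i), vec4 0 1 (- zeta^+j) 0).

Definition canon (k : nat * nat * nat) : {vspace 'rV[C]_4} :=
  (<[(gens k).1]> + <[(gens k).2]>)%VS.

Definition ceq (k : nat * nat * nat) (w : 'rV[C]_4) : Prop :=
  let: (t, i, j) := k in
  if t == 0%N then cy w = zeta^+i * cx w /\ cw w = zeta^+j * cz w
  else if t == 1%N then cz w = zeta^+i * cx w /\ cw w = zeta^+j * cy w
  else cw w = - zeta^+i * cx w /\ cz w = - zeta^+j * cy w.

Lemma mem_canon k w : w \in canon k <-> ceq k w.
Proof.
case: k => [[t i] j]; rewrite /canon /ceq /gens; split.
  move/memv_addP => [u /vlineP [a ->] [v /vlineP [b ->] ->]].
  by case: t => [|[|t]]; rewrite /= vec4_comb !coordE; split; ring.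
case: t => [|[|t]] => /= -[h1 h2].
- have -> : w = cx w *: vec4 1 (zeta^+i) 0 0 + cz w *: vec4 0 0 1 (zeta^+j).
    by rewrite vec4_comb {1}(vec4E w) h1 h2; congr vec4; ring.
  by apply: memv_add; apply: memvZ; apply: memv_line.
- have -> : w = cx w *: vec4 1 0 (zeta^+i) 0 + cy w *: vec4 0 1 0 (zeta^+j).
    by rewrite vec4_comb {1}(vec4E w) h1 h2; congr vec4; ring.
  by apply: memv_add; apply: memvZ; apply: memv_line.
- have -> : w = cx w *: vec4 1 0 0 (- zeta^+i) + cy w *: vec4 0 1 (- zeta^+j) 0.
    by rewrite vec4_comb {1}(vec4E w) h1 h2; congr vec4; ring.
  by apply: memv_add; apply: memvZ; apply: memv_line.
Qed.

Lemma dim2 (f g : 'rV[C]_4 -> C) u v :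
  (forall a x, f (a *: x) = a * f x) -> (forall a x, g (a *: x) = a * g x) ->
  f u = 1 -> g u = 0 -> f v = 0 -> g v = 1 ->
  \dim (<[u]> + <[v]>)%VS = 2%N.
Proof.
move=> fZ gZ fu gu fv gv.
have u0 : u != 0 by apply/eqP => u0; move: fu; rewrite u0 -(scale0r 0) fZ mul0r => /eqP; rewrite eq_sym oner_eq0.
have v0 : v != 0 by apply/eqP => v0; move: gv; rewrite v0 -(scale0r 0) gZ mul0r => /eqP; rewrite eq_sym oner_eq0.
rewrite dimv_disjoint_sum ?dim_vline ?u0 ?v0 //.
apply/eqP; rewrite -subv0; apply/subvP => w; rewrite memv_cap memv0.
case/andP => /vlineP [a ->] /vlineP [b e].
have : f (a *: u) = f (b *: v) by rewrite e.
by rewrite !fZ fu fv mulr1 mulr0 => ->; rewrite scale0r.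
Qed.

Lemma dim_canon k : \dim (canon k) = 2%N.
Proof.
case: k => [[t i] j]; rewrite /canon /gens.
case: t => [|[|t]] => /=.
- by apply: (@dim2 cx cz) => *; rewrite ?coordE.
- by apply: (@dim2 cx cy) => *; rewrite ?coordE.
- by apply: (@dim2 cx cy) => *; rewrite ?coordE.
Qed.

Lemma canon_on_F5 k : line_on_F5 (canon k).
Proof.
split; first exact: dim_canon.
move=> w /mem_canon; case: k => [[t i] j]; rewrite /ceq /fermat5.
have e5 : forall a : C, (- a)^+5 = - a^+5 by move=> a; ring.
by case: t => [|[|t]] => -[-> ->]; rewrite !exprMn ?e5 !zetaX5; ring.
Qed.


Lemma keyP a : a \in allkeys -> [/\ (a.1.1 < 3)%N, (a.1.2 < 5)%N & (a.2 < 5)%N].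
Proof.
have H : all (fun a => [&& (a.1.1 < 3)%N, (a.1.2 < 5)%N & (a.2 < 5)%N]) allkeys = true by vm_compute.
by move=> Ha; have /and3P := allP H a Ha.
Qed.

Lemma meet_of a b w : w != 0 -> ceq a w -> ceq b w -> ~ disjoint_lines (canon a) (canon b).
Proof.
move=> w0 /mem_canon ha /mem_canon hb; rewrite /disjoint_lines => e.
have : w \in (canon a :&: canon b)%VS by rewrite memv_cap ha hb.
by rewrite e memv0 (negbTE w0).
Qed.

Lemma disj_of a b : (forall w, ceq a w -> ceq b w -> w = 0) -> disjoint_lines (canon a) (canon b).
Proof.
move=> H; apply/eqP; rewrite -subv0; apply/subvP => w.
by rewrite memv_cap memv0 => /andP [/mem_canon ha /mem_canon hb]; rewrite (H w ha hb).
Qed.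

Lemma neq0_x w : cx w != 0 -> w != 0.
Proof. by apply: contra => /eqP ->; rewrite cx0. Qed.
Lemma neq0_y w : cy w != 0 -> w != 0.
Proof. by apply: contra => /eqP ->; rewrite cy0. Qed.
Lemma neq0_z w : cz w != 0 -> w != 0.
Proof. by apply: contra => /eqP ->; rewrite cz0. Qed.

Lemma zmod i j : (i == j %[mod 5])%N -> zeta ^+ i = zeta ^+ j.
Proof. by rewrite -zetaE => /eqP. Qed.
Lemma znmod i j : ~~ (i == j %[mod 5])%N -> zeta ^+ i != zeta ^+ j.
Proof. by rewrite -zetaE. Qed.

Lemma oneq0 : (1 : C) != 0. Proof. exact: oner_neq0. Qed.

Lemma meet01 i j k l : zeta^+i * zeta^+l = zeta^+j * zeta^+k ->
  exists w, [/\ w != 0, ceq (0%N, i, j) w & ceq (1%N, k, l) w].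
Proof.
move=> H; exists (vec4 1 (zeta^+i) (zeta^+k) (zeta^+j * zeta^+k)).
rewrite /ceq /= !coordE; split; first by apply: neq0_x; rewrite coordE oneq0.
  by split; ring.
by split; [ring | rewrite -H; ring].
Qed.

Lemma meet02 i j k l : zeta^+k = zeta^+i * zeta^+j * zeta^+l ->
  exists w, [/\ w != 0, ceq (0%N, i, j) w & ceq (2%N, k, l) w].
Proof.
move=> H; exists (vec4 1 (zeta^+i) (- (zeta^+i * zeta^+l)) (- (zeta^+i * zeta^+j * zeta^+l))).
rewrite /ceq /= !coordE; split; first by apply: neq0_x; rewrite coordE oneq0.
  by split; ring.
by split; [rewrite H; ring | ring].
Qed.

Lemma meet12 i j k l : zeta^+k * zeta^+l = zeta^+i * zeta^+j ->
  exists w, [/\ w != 0, ceq (1%N, i, j) w & ceq (2%N, k, l) w].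
Proof.
move=> H; exists (vec4 (zeta^+l) (- zeta^+i) (zeta^+i * zeta^+l) (- (zeta^+i * zeta^+j))).
rewrite /ceq /= !coordE; split; first by apply: neq0_x; rewrite coordE zetaX_neq0.
  by split; ring.
by split; [rewrite -H; ring | ring].
Qed.

Lemma meet_same t i j k l : (t < 3)%N -> (i == k) || (j == l) ->
  exists w, [/\ w != 0, ceq (t, i, j) w & ceq (t, k, l) w].
Proof.
move=> t3 /orP [/eqP <-|/eqP <-].
  exists (vec4 1 (if t == 0%N then zeta^+i else 0) (if t == 1%N then zeta^+i else 0)
    (if t == 2%N then - zeta^+i else 0)).
  case: t t3 => [|[|[|t]]] // _; rewrite /ceq /= !coordE;
   (split; first by apply: neq0_x; rewrite coordE oneq0); by split; ring.
exists (vec4 0 (if t == 0%N then 0 else 1) (if t == 0%N then 1 else if t == 2%N then - zeta^+j else 0)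
    (if t == 0%N then zeta^+j else if t == 1%N then zeta^+j else 0)).
case: t t3 => [|[|[|t]]] // _; rewrite /ceq /= !coordE.
- by split; [apply: neq0_z; rewrite coordE oneq0 | split; ring | split; ring].
- by split; [apply: neq0_y; rewrite coordE oneq0 | split; ring | split; ring].
- by split; [apply: neq0_y; rewrite coordE oneq0 | split; ring | split; ring].
Qed.

Lemma adj_meet a b : a \in allkeys -> b \in allkeys -> adjk a b ->
  ~ disjoint_lines (canon a) (canon b).
Proof.
case: a => [[t i] j]; case: b => [[u k] l] /keyP [/= t3 _ _] /keyP [/= u3 _ _] H.
have [w [w0 ha hb]] : exists w, [/\ w != 0, ceq (t, i, j) w & ceq (u, k, l) w];
  last exact: (meet_of w0 ha hb).
case: t t3 H => [|[|[|t]]] // _; case: u u3 => [|[|[|u]]] // _; move=> H; rewrite /adjk in H; simpl in H;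
  try (by apply: meet_same).
- by apply: meet01; rewrite -!exprD; apply: zmod.
- by apply: meet02; rewrite -!exprD; apply: zmod.
- have [w [w0 h1 h2]] : exists w, [/\ w != 0, ceq (0%N, k, l) w & ceq (1%N, i, j) w].
    by apply: meet01; rewrite -!exprD; apply: zmod.
  by exists w.
- by apply: meet12; rewrite -!exprD; apply: zmod.
- have [w [w0 h1 h2]] : exists w, [/\ w != 0, ceq (0%N, k, l) w & ceq (2%N, i, j) w].
    by apply: meet02; rewrite -!exprD; apply: zmod.
  by exists w.
- have [w [w0 h1 h2]] : exists w, [/\ w != 0, ceq (1%N, k, l) w & ceq (2%N, i, j) w].
    by apply: meet12; rewrite -!exprD; apply: zmod; rewrite eq_sym.
  by exists w.
Qed.


Lemma canc (A B x : C) : A * x = B * x -> A != B -> x = 0.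
Proof.
move=> e nAB; apply/eqP; apply: contraNT nAB => x0; apply/eqP; exact: (mulIf x0 e).
Qed.

Lemma zneq i k : (i < 5)%N -> (k < 5)%N -> i != k -> zeta ^+ i != zeta ^+ k.
Proof. by move=> i5 k5 ik; apply: znmod; rewrite !modn_small. Qed.

Lemma disj_same t i j k l : (t < 3)%N -> (i < 5)%N -> (j < 5)%N -> (k < 5)%N -> (l < 5)%N ->
  i != k -> j != l -> disjoint_lines (canon (t, i, j)) (canon (t, k, l)).
Proof.
move=> t3 i5 j5 k5 l5 ik jl; apply: disj_of => w.
have zik := zneq i5 k5 ik; have zjl := zneq j5 l5 jl.
case: t t3 => [|[|[|t]]] // _ /= [h1 h2] [h3 h4].
- have x0 : cx w = 0 by apply: (canc _ zik); rewrite -h1 -h3.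
  have z0 : cz w = 0 by apply: (canc _ zjl); rewrite -h2 -h4.
  by apply: vec4_eq0; rewrite ?h1 ?h2 ?x0 ?z0 ?mulr0.
- have x0 : cx w = 0 by apply: (canc _ zik); rewrite -h1 -h3.
  have y0 : cy w = 0 by apply: (canc _ zjl); rewrite -h2 -h4.
  by apply: vec4_eq0; rewrite ?h1 ?h2 ?x0 ?y0 ?mulr0.
- have zik' : - zeta ^+ i != - zeta ^+ k by rewrite eqr_opp.
  have zjl' : - zeta ^+ j != - zeta ^+ l by rewrite eqr_opp.
  have x0 : cx w = 0 by apply: (canc _ zik'); rewrite -h1 -h3.
  have y0 : cy w = 0 by apply: (canc _ zjl'); rewrite -h2 -h4.
  by apply: vec4_eq0; rewrite ?h1 ?h2 ?x0 ?y0 ?mulr0.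
Qed.

Lemma disj01 i j k l : zeta^+j * zeta^+k != zeta^+l * zeta^+i ->
  disjoint_lines (canon (0%N, i, j)) (canon (1%N, k, l)).
Proof.
move=> H; apply: disj_of => w /= [h1 h2] [h3 h4].
have x0 : cx w = 0.
  apply: (canc _ H); rewrite -!mulrA -h3 -h1 -h2 -h4 //.
have z0 : cz w = 0 by rewrite h3 x0 mulr0.
have y0 : cy w = 0 by rewrite h1 x0 mulr0.
by apply: vec4_eq0; rewrite ?h2 ?z0 ?mulr0.
Qed.

Lemma disj02 i j k l : zeta^+j * zeta^+l * zeta^+i != zeta^+k ->
  disjoint_lines (canon (0%N, i, j)) (canon (2%N, k, l)).
Proof.
move=> H; apply: disj_of => w /= [h1 h2] [h3 h4].
have x0 : cx w = 0.
  apply: (canc _ H); apply: oppr_inj; rewrite -!mulNr -h3 h2 h4 h1; ring.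
have y0 : cy w = 0 by rewrite h1 x0 mulr0.
have z0 : cz w = 0 by rewrite h4 y0 mulr0.
by apply: vec4_eq0; rewrite ?h2 ?z0 ?mulr0.
Qed.

Lemma disj12 i j k l : zeta^+i * zeta^+j != zeta^+k * zeta^+l ->
  disjoint_lines (canon (1%N, i, j)) (canon (2%N, k, l)).
Proof.
move=> H; apply: disj_of => w /= [h1 h2] [h3 h4].
have x0 : cx w = 0.
  apply: (canc _ H).
  have e1 : zeta^+i * cx w = - zeta^+l * cy w by rewrite -h1 h4.
  have e2 : zeta^+j * cy w = - zeta^+k * cx w by rewrite -h2 h3.
  rewrite (_ : zeta^+i * zeta^+j * cx w = zeta^+j * (zeta^+i * cx w)); last by ring.
  rewrite e1 (_ : zeta^+j * (- zeta^+l * cy w) = - zeta^+l * (zeta^+j * cy w)); last by ring.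
  rewrite e2; ring.
have z0 : cz w = 0 by rewrite h1 x0 mulr0.
have w0 : cw w = 0 by rewrite h3 x0 mulr0.
have y0 : cy w = 0.
  have : zeta^+j * cy w = 0 by rewrite -h2.
  by move/eqP; rewrite mulf_eq0 (negbTE (zetaX_neq0 j)) /= => /eqP.
by apply: vec4_eq0.
Qed.

Lemma nonadj_disj a b : a \in allkeys -> b \in allkeys -> a != b -> ~~ adjk a b ->
  disjoint_lines (canon a) (canon b).
Proof.
case: a => [[t i] j]; case: b => [[u k] l] /keyP [/= t3 i5 j5] /keyP [/= u3 k5 l5] _.
rewrite /disjoint_lines.
case: t t3 => [|[|[|t]]] // _; case: u u3 => [|[|[|u]]] // _; move=> H; rewrite /adjk in H; simpl in H;
  try (by case/norP: H => H1 H2; apply: disj_same).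
- by apply: disj01; rewrite -!exprD; apply: znmod; move: H; apply: contra => /eqP e; apply/eqP; lia.
- by apply: disj02; rewrite -!exprD; apply: znmod; move: H; apply: contra => /eqP e; apply/eqP; lia.
- by rewrite capvC; apply: disj01; rewrite -!exprD; apply: znmod; move: H; apply: contra => /eqP e; apply/eqP; lia.
- by apply: disj12; rewrite -!exprD; apply: znmod; move: H; apply: contra => /eqP e; apply/eqP; lia.
- by rewrite capvC; apply: disj02; rewrite -!exprD; apply: znmod; move: H; apply: contra => /eqP e; apply/eqP; lia.
- by rewrite capvC; apply: disj12; rewrite -!exprD; apply: znmod; move: H; apply: contra => /eqP e; apply/eqP; lia.
Qed.


Lemma poly6_coefs (C0 C1 C2 C3 C4 C5 : C) :
  (forall t : C, C0 + C1 * t + C2 * t^+2 + C3 * t^+3 + C4 * t^+4 + C5 * t^+5 = 0) ->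
  C0 = 0 /\ C1 = 0 /\ C2 = 0 /\ C3 = 0 /\ C4 = 0 /\ C5 = 0.
Proof.
move=> H.
pose P : {poly C} := \poly_(m < 6) nth 0 [:: C0; C1; C2; C3; C4; C5] m.
have HP : forall t, P.[t] = 0.
  move=> t; apply: etrans _ (H t); rewrite horner_poly !big_ord_recr big_ord0 /=; ring.
have P0 : P = 0.
  apply: (@roots_geq_poly_eq0 _ _ [seq i%:R | i <- iota 0 6]).
  - by apply/allP => x _; apply/rootP; apply: HP.
  - rewrite map_inj_uniq ?iota_uniq // => m n /eqP; rewrite eqr_nat => /eqP //.
  - by rewrite size_map size_iota size_poly.
have cP m : P`_m = nth 0 [:: C0; C1; C2; C3; C4; C5] m.
  rewrite coef_poly; case: ifP => // /negbT; rewrite -leqNgt => h.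
  by rewrite nth_default.
have c m : nth 0 [:: C0; C1; C2; C3; C4; C5] m = 0 by rewrite -cP P0 coef0.
by split; [exact: (c 0%N)|split; [exact: (c 1%N)|split; [exact: (c 2%N)|split;
  [exact: (c 3%N)|split; [exact: (c 4%N)|exact: (c 5%N)]]]]].
Qed.

Lemma nz_mul (x y : C) : x != 0 -> x * y = 0 -> y = 0.
Proof. by move=> x0 /eqP; rewrite mulf_eq0 (negbTE x0) /= => /eqP. Qed.

Lemma nz_exp (x : C) n : x != 0 -> x ^+ n != 0.
Proof. exact: expf_neq0. Qed.

Lemma core (ep eqq er es a b c d : C) : ep != 0 -> eqq != 0 -> er != 0 -> es != 0 ->
  (forall t, ep + eqq * t^+5 + er * (a + t*b)^+5 + es * (c + t*d)^+5 = 0) ->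
  (a = 0 /\ d = 0 /\ ep + es * c^+5 = 0 /\ eqq + er * b^+5 = 0) \/
  (b = 0 /\ c = 0 /\ ep + er * a^+5 = 0 /\ eqq + es * d^+5 = 0).
Proof.
move=> ep0 eqq0 er0 es0 H.
have Hc : forall t : C, (ep + er * a^+5 + es * c^+5) + 5%:R * (er * a^+4 * b + es * c^+4 * d) * t
  + 10%:R * (er * a^+3 * b^+2 + es * c^+3 * d^+2) * t^+2
  + 10%:R * (er * a^+2 * b^+3 + es * c^+2 * d^+3) * t^+3
  + 5%:R * (er * a * b^+4 + es * c * d^+4) * t^+4
  + (eqq + er * b^+5 + es * d^+5) * t^+5 = 0.
  by move=> t; apply: etrans _ (H t); ring.
have [E0 [E1 [E2 [_ [E4 E5]]]]] := poly6_coefs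
  (C0 := ep + er * a^+5 + es * c^+5)
  (C1 := 5%:R * (er * a^+4 * b + es * c^+4 * d))
  (C2 := 10%:R * (er * a^+3 * b^+2 + es * c^+3 * d^+2))
  (C3 := 10%:R * (er * a^+2 * b^+3 + es * c^+2 * d^+3))
  (C4 := 5%:R * (er * a * b^+4 + es * c * d^+4))
  (C5 := eqq + er * b^+5 + es * d^+5) Hc.
have n5 : (5%:R : C) != 0 by rewrite pnatr_eq0.
have n10 : (10%:R : C) != 0 by rewrite pnatr_eq0.
move/(nz_mul n5): E1 => E1; move/(nz_mul n10): E2 => E2; move/(nz_mul n5): E4 => E4.
have [a0|a0] := eqVneq a 0.
  have c0 : c != 0.
    apply/eqP => c0; move: E0; rewrite a0 c0 => e; suff : ep = 0 by move/eqP; rewrite (negbTE ep0).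
    by rewrite -e; ring.
  have d0 : d = 0.
    have : es * c^+4 * d = 0 by rewrite -E1 a0; ring.
    by rewrite -mulrA => /(nz_mul es0) /(nz_mul (nz_exp 4 c0)).
  left; split=> //; split=> //; split.
    by rewrite -E0 a0; ring.
  by rewrite -E5 d0; ring.
have [b0|b0] := eqVneq b 0.
  have d0 : d != 0.
    apply/eqP => d0; move: E5; rewrite b0 d0 => e; suff : eqq = 0 by move/eqP; rewrite (negbTE eqq0).
    by rewrite -e; ring.
  have c0 : c = 0.
    have : es * d^+4 * c = 0 by rewrite -E4 b0; ring.
    by rewrite -mulrA => /(nz_mul es0) /(nz_mul (nz_exp 4 d0)).
  right; split=> //; split=> //; split.
    by rewrite -E0 c0; ring.
  by rewrite -E5 b0; ring.
exfalso.
have c0 : c != 0.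
  apply/eqP => c0; move: E1; rewrite c0 => e.
  have : er * (a^+4 * b) = 0 by rewrite -e; ring.
  by move/(nz_mul er0)/(nz_mul (nz_exp 4 a0))/eqP; rewrite (negbTE b0).
have d0 : d != 0.
  apply/eqP => d0; move: E1; rewrite d0 => e.
  have : er * (a^+4 * b) = 0 by rewrite -e; ring.
  by move/(nz_mul er0)/(nz_mul (nz_exp 4 a0))/eqP; rewrite (negbTE b0).
have adbc : a * d - b * c = 0.
  have : er * (a^+3 * (b * (c^+3 * (d * (a * d - b * c))))) = 0.
    rewrite (_ : _ * _ = c^+3 * d^+2 * (er * a^+4 * b + es * c^+4 * d)
                   - c^+4 * d * (er * a^+3 * b^+2 + es * c^+3 * d^+2)); last by ring.
    by rewrite E1 E2; ring.
  by move/(nz_mul er0)/(nz_mul (nz_exp 3 a0))/(nz_mul b0)/(nz_mul (nz_exp 3 c0))/(nz_mul d0).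
have : b * (er * a^+5 + es * c^+5) = 0.
  rewrite (_ : _ * _ = a * (er * a^+4 * b + es * c^+4 * d) - es * c^+4 * (a * d - b * c));
    last by ring.
  by rewrite E1 adbc; ring.
move/(nz_mul b0) => e.
by move/eqP: ep0; apply; rewrite -E0 -addrA e addr0.
Qed.


Definition lin (f : 'rV[C]_4 -> C) :=
  (forall x y, f (x + y) = f x + f y) /\ (forall a x, f (a *: x) = a * f x).

Lemma linB f x y : lin f -> f (x - y) = f x - f y.
Proof. by case=> fD fZ; rewrite -scaleN1r fD fZ mulN1r. Qed.

Lemma lin_cx : lin cx. Proof. by split => *; rewrite coordE. Qed.
Lemma lin_cy : lin cy. Proof. by split => *; rewrite coordE. Qed.
Lemma lin_cz : lin cz. Proof. by split => *; rewrite coordE. Qed.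
Lemma lin_cw : lin cw. Proof. by split => *; rewrite coordE. Qed.

Definition Rel (L : {vspace 'rV[C]_4}) (f1 f2 : 'rV[C]_4 -> C) (e1 e2 : C)
  (f3 f4 : 'rV[C]_4 -> C) (e3 e4 : C) :=
  [/\ e1 != 0, e2 != 0, e3 != 0, e4 != 0 &
  exists b1 b2, [/\ e1 + e2 * b1^+5 = 0, e3 + e4 * b2^+5 = 0 &
     forall w, w \in L -> f2 w = b1 * f1 w /\ f4 w = b2 * f3 w]].

Lemma swapP L f1 f2 e1 e2 f3 f4 e3 e4 :
  Rel L f1 f2 e1 e2 f3 f4 e3 e4 -> Rel L f3 f4 e3 e4 f1 f2 e1 e2.
Proof.
case=> n1 n2 n3 n4 [b1 [b2 [h1 h2 h]]]; split=> //; exists b2, b1; split=> //.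
by move=> w /h [].
Qed.

Lemma inv_rel (e1 e2 b : C) : e1 != 0 -> e1 + e2 * b^+5 = 0 ->
  b != 0 /\ e2 + e1 * (b^-1)^+5 = 0.
Proof.
move=> n1 h.
have b0 : b != 0.
  apply/eqP => b0; move/eqP: n1; apply; rewrite -[RHS]h b0; ring.
split=> //.
have -> : e1 = - (e2 * b^+5) by apply/eqP; rewrite -subr_eq0 opprK h.
rewrite exprVn mulNr -mulrA mulfV ?expf_neq0 // mulr1; ring.
Qed.

Lemma swapA L f1 f2 e1 e2 f3 f4 e3 e4 :
  Rel L f1 f2 e1 e2 f3 f4 e3 e4 -> Rel L f2 f1 e2 e1 f3 f4 e3 e4.
Proof.
case=> n1 n2 n3 n4 [b1 [b2 [h1 h2 h]]]; split=> //.
have [b0 h1'] := inv_rel n1 h1.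
exists b1^-1, b2; split=> // w /h [-> ->]; split=> //.
by rewrite mulrA mulVf // mul1r.
Qed.

Lemma swapB L f1 f2 e1 e2 f3 f4 e3 e4 :
  Rel L f1 f2 e1 e2 f3 f4 e3 e4 -> Rel L f1 f2 e1 e2 f4 f3 e4 e3.
Proof. by move=> H; apply: swapP; apply: swapA; apply: swapP. Qed.

Lemma root1 (b : C) : b ^+ 5 = 1 -> exists2 i, (i < 5)%N & b = zeta ^+ i.
Proof. move=> h; have [i ->] := prim_rootP zetaP h; by exists i; [exact: ltn_ord|]. Qed.

Lemma rootm1 (b : C) : b ^+ 5 = -1 -> exists2 i, (i < 5)%N & b = - zeta ^+ i.
Proof.
move=> h; have [|i i5 e] := @root1 (- b).
  have e : (- b)^+5 = - b^+5 by ring.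
  by rewrite e h opprK.
by exists i => //; rewrite -e opprK.
Qed.

Lemma inkeys t i j : (t < 3)%N -> (i < 5)%N -> (j < 5)%N -> (t, i, j) \in allkeys.
Proof.
move=> t3 i5 j5.
have H : all (fun t => all (fun i => all (fun j => (t, i, j) \in allkeys) (iota 0 5)) (iota 0 5)) (iota 0 3) = true.
  by vm_compute.
have /allP/(_ t) := H; rewrite mem_iota t3 => /(_ isT) /allP /(_ i); rewrite mem_iota i5.
by move=> /(_ isT) /allP /(_ j); rewrite mem_iota j5 => /(_ isT).
Qed.

Lemma canon0 L : Rel L cx cy 1 (-1) cz cw (-1) 1 ->
  exists2 k, k \in allkeys & (L <= canon k)%VS.
Proof.
case=> _ _ _ _ [b1 [b2 [h1 h2 h]]].
have [i i5 eb1] : exists2 i, (i < 5)%N & b1 = zeta ^+ i.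
  by apply: root1; rewrite -[LHS]addr0 -h1; ring.
have [j j5 eb2] : exists2 j, (j < 5)%N & b2 = zeta ^+ j.
  by apply: root1; rewrite -[LHS]subr0 -h2; ring.
exists (0%N, i, j); first exact: inkeys.
by apply/subvP => w /h hw; apply/mem_canon; rewrite /ceq /= -eb1 -eb2.
Qed.

Lemma canon1 L : Rel L cx cz 1 (-1) cy cw (-1) 1 ->
  exists2 k, k \in allkeys & (L <= canon k)%VS.
Proof.
case=> _ _ _ _ [b1 [b2 [h1 h2 h]]].
have [i i5 eb1] : exists2 i, (i < 5)%N & b1 = zeta ^+ i.
  by apply: root1; rewrite -[LHS]addr0 -h1; ring.
have [j j5 eb2] : exists2 j, (j < 5)%N & b2 = zeta ^+ j.
  by apply: root1; rewrite -[LHS]subr0 -h2; ring.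
exists (1%N, i, j); first exact: inkeys.
by apply/subvP => w /h hw; apply/mem_canon; rewrite /ceq /= -eb1 -eb2.
Qed.

Lemma canon2 L : Rel L cx cw 1 1 cy cz (-1) (-1) ->
  exists2 k, k \in allkeys & (L <= canon k)%VS.
Proof.
case=> _ _ _ _ [b1 [b2 [h1 h2 h]]].
have [i i5 eb1] : exists2 i, (i < 5)%N & b1 = - zeta ^+ i.
  by apply: rootm1; rewrite -[LHS]subr0 -h1; ring.
have [j j5 eb2] : exists2 j, (j < 5)%N & b2 = - zeta ^+ j.
  by apply: rootm1; rewrite -[LHS]addr0 -h2; ring.
exists (2%N, i, j); first exact: inkeys.
by apply/subvP => w /h hw; apply/mem_canon; rewrite /ceq /= -eb1 -eb2.
Qed.


Lemma step L fp fq fr fs ep eqq er es u0 v0 :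
  lin fp -> lin fq -> lin fr -> lin fs ->
  ep != 0 -> eqq != 0 -> er != 0 -> es != 0 ->
  (forall w, fermat5 w = ep * fp w ^+ 5 + eqq * fq w ^+ 5 + er * fr w ^+ 5 + es * fs w ^+ 5) ->
  \dim L = 2%N -> (forall w, w \in L -> fermat5 w = 0) ->
  u0 \in L -> v0 \in L -> fp v0 != 0 -> fq (u0 - (fp u0 / fp v0) *: v0) != 0 ->
  Rel L fp fs ep es fq fr eqq er \/ Rel L fp fr ep er fq fs eqq es.
Proof.
move=> lp lq lr ls n1 n2 n3 n4 fe dL FL u0L v0L pv0 qu1.
set v1 := (fp v0)^-1 *: v0.
set u1 := u0 - (fp u0 / fp v0) *: v0.
have fpv1 : fp v1 = 1 by rewrite /v1 lp.2 mulVf.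
have fpu1 : fp u1 = 0 by rewrite /u1 (linB _ _ lp) lp.2 divfK // subrr.
set v := (fq u1)^-1 *: u1.
set u := v1 - fq v1 *: v.
have fqv : fq v = 1 by rewrite /v lq.2 mulVf.
have fpv : fp v = 0 by rewrite /v lp.2 fpu1 mulr0.
have fpu : fp u = 1 by rewrite /u (linB _ _ lp) (lp.2 _ v) fpv mulr0 subr0 fpv1.
have fqu : fq u = 0 by rewrite /u (linB _ _ lq) (lq.2 _ v) fqv mulr1 subrr.
have u1L : u1 \in L by apply: memvB => //; apply: memvZ.
have v1L : v1 \in L by apply: memvZ.
have vL : v \in L by apply: memvZ.
have uL : u \in L by apply: memvB => //; apply: memvZ.
clearbody u v v1 u1.
have LE : L = (<[u]> + <[v]>)%VS.
  apply/eqP; rewrite eq_sym eqEdim subv_add -!memvE uL vL dL /=.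
  by rewrite (dim2 lp.2 lq.2 fpu fqu fpv fqv).
have decomp : forall w, w \in L -> w = fp w *: u + fq w *: v.
  move=> w; rewrite LE => /memv_addP [x /vlineP [a ->] [y /vlineP [b ->] ->]].
  by rewrite lp.1 lq.1 !lp.2 !lq.2 fpu fqu fpv fqv !mulr1 !mulr0 addr0 add0r.
set a := fr u; set b := fr v; set c := fs u; set d := fs v.
have Ht : forall t, ep + eqq * t^+5 + er * (a + t*b)^+5 + es * (c + t*d)^+5 = 0.
  move=> t; have wL : u + t *: v \in L by apply: memvD => //; apply: memvZ.
  rewrite -(FL _ wL) fe lp.1 lq.1 lr.1 ls.1 lp.2 lq.2 lr.2 ls.2 fpu fqu fpv fqv.
  rewrite -/a -/b -/c -/d; ring.
have [[a0 [d0 [e1 e2]]]|[b0 [c0 [e1 e2]]]] := core n1 n2 n3 n4 Ht.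
- left; split=> //; exists c, b; split=> // w wL.
  have Dw := decomp w wL; move: Dw; set al := fp w; set be := fq w => Dw.
  rewrite Dw ls.1 lr.1 !ls.2 !lr.2 -/a -/b -/c -/d a0 d0; split; ring.
- right; split=> //; exists a, d; split=> // w wL.
  have Dw := decomp w wL; move: Dw; set al := fp w; set be := fq w => Dw.
  rewrite Dw ls.1 lr.1 !ls.2 !lr.2 -/a -/b -/c -/d b0 c0; split; ring.
Qed.


Lemma u1P fp (u0 v0 : 'rV[C]_4) : lin fp -> fp v0 != 0 -> u0 \notin <[v0]>%VS ->
  (u0 - (fp u0 / fp v0) *: v0) != 0 /\ fp (u0 - (fp u0 / fp v0) *: v0) = 0.
Proof.
move=> lp pv0 nu0; split.
  apply: contraNneq nu0 => /eqP; rewrite subr_eq0 => /eqP ->.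
  by apply: memvZ; apply: memv_line.
by rewrite (linB _ _ lp) lp.2 divfK // subrr.
Qed.

Lemma nzc w : w != 0 -> [\/ cx w != 0, cy w != 0, cz w != 0 | cw w != 0].
Proof.
move=> w0; case: (eqVneq (cx w) 0) => [hx|]; last by move=> h; apply: Or41.
case: (eqVneq (cy w) 0) => [hy|]; last by move=> h; apply: Or42.
case: (eqVneq (cz w) 0) => [hz|]; last by move=> h; apply: Or43.
case: (eqVneq (cw w) 0) => [hw|]; last by move=> h; apply: Or44.
by move: w0; rewrite (vec4_eq0 hx hy hz hw) eqxx.
Qed.

Lemma basis2 (L : {vspace 'rV[C]_4}) : \dim L = 2%N ->
  exists u0 v0, [/\ u0 \in L, v0 \in L, v0 != 0 & u0 \notin <[v0]>%VS].
Proof.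
move=> dL.
have [X [szX spX frX]] : exists X : seq 'rV[C]_4, [/\ size X = 2%N, <<X>>%VS = L & free X].
  exists (vbasis L); split.
    by rewrite size_tuple; exact: dL.
    exact: span_basis (vbasisP L).
  exact: basis_free (vbasisP L).
case: X szX spX frX => [|u0 [|v0 [|]]] //= _ spX frX.
exists u0, v0; move: frX; rewrite free_cons span_seq1 seq1_free => /andP [h1 h2].
split=> //; rewrite -spX; apply: memv_span; rewrite !inE eqxx ?orbT //.
Qed.

Ltac linT := first [exact: lin_cx | exact: lin_cy | exact: lin_cz | exact: lin_cw].
Ltac nzT := first [exact: oner_neq0 | by rewrite oppr_eq0 oner_eq0].
Ltac feT := let w := fresh in move=> w; rewrite /fermat5; ring.
Ltac fin H := first [ exact: (canon0 H) | exact: (canon1 H) | exact: (canon2 H)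
  | exact: (canon0 (swapA H)) | exact: (canon1 (swapA H)) | exact: (canon2 (swapA H))
  | exact: (canon0 (swapB H)) | exact: (canon1 (swapB H)) | exact: (canon2 (swapB H))
  | exact: (canon0 (swapA (swapB H))) | exact: (canon1 (swapA (swapB H))) | exact: (canon2 (swapA (swapB H)))
  | exact: (canon0 (swapP H)) | exact: (canon1 (swapP H)) | exact: (canon2 (swapP H))
  | exact: (canon0 (swapA (swapP H))) | exact: (canon1 (swapA (swapP H))) | exact: (canon2 (swapA (swapP H)))
  | exact: (canon0 (swapB (swapP H))) | exact: (canon1 (swapB (swapP H))) | exact: (canon2 (swapB (swapP H)))
  | exact: (canon0 (swapA (swapB (swapP H)))) | exact: (canon1 (swapA (swapB (swapP H))))
  | exact: (canon2 (swapA (swapB (swapP H)))) ].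

Lemma classify L : line_on_F5 L -> exists2 k, k \in allkeys & L = canon k.
Proof.
case=> dL FL.
suff [k kA Lk] : exists2 k, k \in allkeys & (L <= canon k)%VS.
  by exists k => //; apply/eqP; rewrite eqEdim Lk dim_canon dL leqnn.
have [u0 [v0 [u0L v0L v00 nu0]]] := basis2 dL.
Ltac doit L u0 v0 dL FL u0L v0L hp hq fp fq fr fs ep eq er es :=
  let H := fresh "H" in
  have [H|H] := @step L fp fq fr fs ep eq er es u0 v0 ltac:(linT) ltac:(linT) ltac:(linT)
     ltac:(linT) ltac:(nzT) ltac:(nzT) ltac:(nzT) ltac:(nzT) ltac:(feT) dL FL u0L v0L hp hq;
  fin H.
case: (nzc v00) => hp.
- have [u10 pu1] := u1P lin_cx hp nu0.
  case: (nzc u10) => hq; first by rewrite pu1 eqxx in hq.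
  + doit L u0 v0 dL FL u0L v0L hp hq cx cy cz cw (1:C) (-1:C) (-1:C) (1:C).
  + doit L u0 v0 dL FL u0L v0L hp hq cx cz cy cw (1:C) (-1:C) (-1:C) (1:C).
  + doit L u0 v0 dL FL u0L v0L hp hq cx cw cy cz (1:C) (1:C) (-1:C) (-1:C).
- have [u10 pu1] := u1P lin_cy hp nu0.
  case: (nzc u10) => hq.
  + doit L u0 v0 dL FL u0L v0L hp hq cy cx cz cw (-1:C) (1:C) (-1:C) (1:C).
  + by rewrite pu1 eqxx in hq.
  + doit L u0 v0 dL FL u0L v0L hp hq cy cz cx cw (-1:C) (-1:C) (1:C) (1:C).
  + doit L u0 v0 dL FL u0L v0L hp hq cy cw cx cz (-1:C) (1:C) (1:C) (-1:C).
- have [u10 pu1] := u1P lin_cz hp nu0.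
  case: (nzc u10) => hq.
  + doit L u0 v0 dL FL u0L v0L hp hq cz cx cy cw (-1:C) (1:C) (-1:C) (1:C).
  + doit L u0 v0 dL FL u0L v0L hp hq cz cy cx cw (-1:C) (-1:C) (1:C) (1:C).
  + by rewrite pu1 eqxx in hq.
  + doit L u0 v0 dL FL u0L v0L hp hq cz cw cx cy (-1:C) (1:C) (1:C) (-1:C).
- have [u10 pu1] := u1P lin_cw hp nu0.
  case: (nzc u10) => hq.
  + doit L u0 v0 dL FL u0L v0L hp hq cw cx cy cz (1:C) (1:C) (-1:C) (-1:C).
  + doit L u0 v0 dL FL u0L v0L hp hq cw cy cx cz (1:C) (-1:C) (1:C) (-1:C).
  + doit L u0 v0 dL FL u0L v0L hp hq cw cz cx cy (1:C) (-1:C) (1:C) (-1:C).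
  + by rewrite pu1 eqxx in hq.
Qed.


Lemma map_uniq_in (T1 T2 : eqType) (f : T1 -> T2) s x y :
  uniq (map f s) -> x \in s -> y \in s -> f x = f y -> x = y.
Proof.
elim: s => [|a s IH] //= /andP [nfa us]; rewrite !inE.
case/orP => [/eqP ->|xs]; case/orP => [/eqP ->|ys] //.
- by move=> e; move: nfa; rewrite e map_f.
- by move=> e; move: nfa; rewrite -e map_f.
- exact: IH.
Qed.

Lemma lift_keys (s : seq {vspace 'rV[C]_4}) : (forall L, L \in s -> line_on_F5 L) ->
  exists ks, map canon ks = s /\ {subset ks <= allkeys}.
Proof.
elim: s => [|L s IH] H; first by exists [::].
have [|ks [e sk]] := IH; first by move=> L' L's; apply: H; rewrite inE L's orbT.
have [k kA Lk] := classify (H L (mem_head _ _)).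
exists (k :: ks); split; first by rewrite /= e Lk.
by move=> x; rewrite inE => /orP [/eqP ->|/sk].
Qed.

Definition S13 : seq key := [:: (0, 0, 0); (0, 1, 1); (0, 2, 2); (0, 3, 4); (0, 4, 3);
  (1, 0, 2); (1, 1, 3); (1, 2, 0); (1, 3, 1); (2, 1, 0); (2, 2, 4); (2, 3, 2); (2, 4, 1)]%N.

Lemma canon_neq0 k : canon k != 0%VS.
Proof. by apply/eqP => e; move: (dim_canon k); rewrite e dimv0. Qed.

Theorem theorem3p6 :
  (exists s : seq {vspace 'rV[C]_4}, disjoint_family_on_F5 s /\ size s = 13%N) /\
  (forall s : seq {vspace 'rV[C]_4}, disjoint_family_on_F5 s -> (size s <= 13)%N).
Proof.
split.
  have SA : all (fun a => a \in allkeys) S13 by vm_compute.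
  have SN : all (fun a => all (fun b => (a == b) || ~~ adjk a b) S13) S13 by vm_compute.
  have SU : uniq S13 by vm_compute.
  have disjS : forall a b, a \in S13 -> b \in S13 -> a != b -> disjoint_lines (canon a) (canon b).
    move=> a b aS bS ab; apply: nonadj_disj => //; try exact: (allP SA).
    by move: (allP (allP SN a aS) b bS); rewrite (negbTE ab).
  exists (map canon S13); split; last by rewrite size_map.
  split.
  - rewrite map_inj_in_uniq // => a b aS bS e; apply/eqP; apply/negPn/negP => ab.
    by move: (disjS a b aS bS ab); rewrite /disjoint_lines e capvv => /eqP; rewrite (negbTE (canon_neq0 b)).
  - by move=> L /mapP [k _ ->]; apply: canon_on_F5.
  - move=> L1 L2 /mapP [a aS ->] /mapP [b bS ->] ne; apply: disjS => //.
    by apply: contraNneq ne => ->.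
move=> s [us Ls Ds].
have [ks [eks kA]] := lift_keys Ls.
have uks : uniq ks by move: us; rewrite -eks => /map_uniq.
rewrite -eks size_map; apply: indep_le13 => // x y xk yk xy.
apply/negP => axy.
have cxy : canon x != canon y.
  apply: contraNneq xy => e; apply/eqP; apply: (map_uniq_in (f := canon) (s := ks)) => //.
  by rewrite eks.
apply: (adj_meet (kA _ xk) (kA _ yk) axy); apply: Ds => //; rewrite -eks map_f //.
Qed.
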